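(* Let $H$ be a complex Hilbert space, $A\in B(H)$ a nonzero positive semidefinite operator, and $T\in B_{A^{1/2}}(H)$. If $\lambda\in\mathbb C$ satisfies $\|T\|_A<|\lambda|$ and $\|T^{\diamond}\|_A<|\lambda|$, then $\lambda\in\rho_A(T^{\diamond})$.
   Context: $\|x\|_A=\langle Ax,x\rangle^{1/2}$. For $S\in B(H)$, $\|S\|_A=\sup\{\|Sx\|_A : x\in\overline{R(A)},\ \|x\|_A=1\}$. $B_{A^{1/2}}(H)=\{S\in B(H): R(S^*A^{1/2})\subset R(A^{1/2})\}$. For $S\in B_{A^{1/2}}(H)$, $S^{\diamond}$ is the unique operator in $B(H)$ with $S^*A^{1/2}=A^{1/2}S^{\diamond}$ and $R(S^{\diamond})\subset\overline{R(A^{1/2})}$; $S^\diamond\in B_{A^{1/2}}(H)$. $S\in B_{A^{1/2}}(H)$ is $A$-invertible in $B_{A^{1/2}}(H)$ if there is a nonzero $R\in B_{A^{1/2}}(H)$ with $ASR=ARS=A$; $\rho_A(S)=\{\lambda:\lambda I-S$ is $A$-invertible in $B_{A^{1/2}}(H)\}$. *)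

(* Defs.v *)
From HB Require Import structures.
From mathcomp Require Import all_boot all_order all_algebra.
From mathcomp Require Import boolp classical_sets reals constructive_ereal ereal.
From mathcomp Require Import complex.
Set Implicit Arguments. Unset Strict Implicit. Unset Printing Implicit Defensive.
Import Order.TTheory GRing.Theory Num.Theory.
Local Open Scope ring_scope.
Local Open Scope classical_set_scope.

Section Hilbert.
Variables (R : realType) (H : lmodType R[i]) (ip : H -> H -> R[i]).

Definition hnorm (x : H) : R := Num.sqrt (complex.Re (ip x x)).

Definition is_hilbert : Prop :=
  [/\ (forall (a : R[i]) x y z, ip (a *: x + y) z = a * ip x z + ip y z),
      (forall x y, ip x y = (ip y x)^*),
      (forall x, 0 <= ip x x),
      (forall x, ip x x = 0 -> x = 0) &
      (forall u : nat -> H,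
          (forall e : R, 0 < e -> exists N, forall m n, (N <= m)%N -> (N <= n)%N ->
               hnorm (u m - u n) < e) ->
          exists l : H, forall e : R, 0 < e -> exists N, forall n, (N <= n)%N ->
               hnorm (u n - l) < e)].

Definition bounded_op (S : H -> H) : Prop :=
  linear S /\ exists M : R, forall x, hnorm (S x) <= M * hnorm x.

Definition is_adjoint (S Sa : H -> H) : Prop :=
  bounded_op Sa /\ forall x y, ip (S x) y = ip x (Sa y).


Definition hclosure (E : set H) : set H :=
  [set x | forall e : R, 0 < e -> exists2 y, E y & hnorm (x - y) < e].

Definition positive_op (A : H -> H) : Prop :=
  bounded_op A /\ forall x, 0 <= ip (A x) x.

(* A12 is the positive square root A^{1/2} of A (it is unique) *)
Definition is_sqrt_op (A A12 : H -> H) : Prop :=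
  positive_op A12 /\ forall x, A12 (A12 x) = A x.

Definition anorm (A : H -> H) (x : H) : R := Num.sqrt (complex.Re (ip (A x) x)).

Definition opnormA (A S : H -> H) : \bar R :=
  ereal_sup [set (anorm A (S x))%:E | x in
               [set x | hclosure (range A) x /\ anorm A x = 1]].

Definition in_BA12 (A12 S : H -> H) : Prop :=
  bounded_op S /\ exists Sa, is_adjoint S Sa /\
     forall y, exists z, Sa (A12 y) = A12 z.

Definition is_diamond (A12 S Sd : H -> H) : Prop :=
  bounded_op Sd /\ (exists Sa, is_adjoint S Sa /\ forall x, Sa (A12 x) = A12 (Sd x))
  /\ (forall x, hclosure (range A12) (Sd x)).

Definition A_invertible (A A12 S : H -> H) : Prop :=
  exists Rr : H -> H, in_BA12 A12 Rr /\ (exists x, Rr x <> 0) /\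
    (forall x, A (S (Rr x)) = A x) /\ (forall x, A (Rr (S x)) = A x).

Definition in_rhoA (A A12 S : H -> H) (l : R[i]) : Prop :=
  A_invertible A A12 (fun x => l *: x - S x).

End Hilbert.

(* modulus |z| of a complex number, as a real number (the norm of R[i] is real) *)
Definition cabs (R : realType) (z : R[i]) : R := complex.Re `|z|.

(* Main.v *)
Require Import Defs.
From HB Require Import structures.
From mathcomp Require Import all_boot all_order all_algebra.
From mathcomp Require Import boolp classical_sets reals constructive_ereal ereal.
From mathcomp Require Import complex.
From mathcomp Require Import ring lra.
Import Order.TTheory GRing.Theory Num.Theory.
Local Open Scope classical_set_scope.
Local Open Scope complex_scope.
Local Open Scope ring_scope.

Lemma getc (R : realType) (a : \bar R) (b : R) : (a < b%:E)%E -> exists c : R, (a <= c%:E)%E /\ c < b.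
Proof.
case: a => [r| |] h.
- by exists r; split => //; rewrite -lte_fin.
- by [].
- by exists (b - 1); split => //; [rewrite leNye | rewrite gtrBl ltr01].
Qed.

Section Basic.
Variables (R : realType) (H : lmodType R[i]) (ip : H -> H -> R[i]).
Hypothesis hH : is_hilbert ip.

Local Notation nm := (hnorm ip).
Local Notation Re := complex.Re.
Local Notation Im := complex.Im.

Lemma ipDZl a x y z : ip (a *: x + y) z = a * ip x z + ip y z.
Proof. by case: hH => h _ _ _ _; apply: h. Qed.
Lemma ipC x y : ip x y = (ip y x)^*.
Proof. by case: hH => _ h _ _ _; apply: h. Qed.
Lemma ip_ge0 x : 0 <= ip x x.
Proof. by case: hH => _ _ h _ _; apply: h. Qed.
Lemma ip_eq0 x : ip x x = 0 -> x = 0.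
Proof. by case: hH => _ _ _ h _; apply: h. Qed.

Lemma ip0l z : ip 0 z = 0.
Proof.
have h := ipDZl 1 0 0 z; rewrite scaler0 addr0 mul1r in h.
by have := congr1 (fun t => t - ip 0 z) h; rewrite subrr addrK => <-.
Qed.
Lemma ipDl x y z : ip (x + y) z = ip x z + ip y z.
Proof. by rewrite -{1}[x]scale1r ipDZl mul1r. Qed.
Lemma ipZl a x z : ip (a *: x) z = a * ip x z.
Proof. by rewrite -[a *: x]addr0 ipDZl ip0l addr0. Qed.
Lemma ipNl x z : ip (- x) z = - ip x z.
Proof. by rewrite -scaleN1r ipZl mulN1r. Qed.
Lemma ipBl x y z : ip (x - y) z = ip x z - ip y z.
Proof. by rewrite ipDl ipNl. Qed.
Lemma ip0r z : ip z 0 = 0.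
Proof. by rewrite ipC ip0l rmorph0 /=. Qed.
Lemma ipDr x y z : ip z (x + y) = ip z x + ip z y.
Proof. by rewrite ipC ipDl rmorphD /= -!ipC. Qed.
Lemma ipZr a x z : ip z (a *: x) = a^* * ip z x.
Proof. by rewrite ipC ipZl rmorphM /= -ipC. Qed.
Lemma ipNr x z : ip z (- x) = - ip z x.
Proof. by rewrite ipC ipNl rmorphN /= -ipC. Qed.
Lemma ipBr x y z : ip z (x - y) = ip z x - ip z y.
Proof. by rewrite ipDr ipNr. Qed.

Lemma ip_sym_ext u v : (forall x, ip x u = ip x v) -> u = v.
Proof.
move=> h; apply/eqP; rewrite -subr_eq0; apply/eqP; apply: ip_eq0.
by rewrite ipBr h subrr.
Qed.

Lemma Im_ipxx x : Im (ip x x) = 0.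
Proof. by have := ip_ge0 x; rewrite lecE => /andP[/eqP -> _]. Qed.
Lemma Re_ipxx_ge0 x : 0 <= Re (ip x x).
Proof. by have := ip_ge0 x; rewrite lecE => /andP[_ ]. Qed.
Lemma ipxxE x : ip x x = (Re (ip x x))%:C.
Proof. by move: (Im_ipxx x); case: (ip x x) => a b /= ->. Qed.

Lemma nm_ge0 x : 0 <= nm x.
Proof. exact: sqrtr_ge0. Qed.
Lemma nm_sqr x : nm x ^+ 2 = Re (ip x x).
Proof. by rewrite sqr_sqrtr // Re_ipxx_ge0. Qed.
Lemma nm_eq0 x : nm x = 0 -> x = 0.
Proof.
move=> h; apply: ip_eq0; rewrite ipxxE -nm_sqr h expr0n /=; done.
Qed.
Lemma nm0 : nm 0 = 0.
Proof. by rewrite /hnorm ip0l /= sqrtr0. Qed.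

Lemma ReD (a b : R[i]) : Re (a + b) = Re a + Re b.
Proof. by case: a; case: b. Qed.
Lemma ReN (a : R[i]) : Re (- a) = - Re a.
Proof. by case: a. Qed.
Lemma ReB (a b : R[i]) : Re (a - b) = Re a - Re b.
Proof. by rewrite ReD ReN. Qed.
Lemma ReM (a b : R[i]) : Re (a * b) = Re a * Re b - Im a * Im b.
Proof. by case: a => ? ?; case: b. Qed.
Lemma ImM (a b : R[i]) : Im (a * b) = Re a * Im b + Im a * Re b.
Proof. by case: a => ? ?; case: b => ? ? /=. Qed.
Lemma ReJ (a : R[i]) : Re (a^*) = Re a.
Proof. by case: a. Qed.
Lemma ImJ (a : R[i]) : Im (a^*) = - Im a.
Proof. by case: a. Qed.
Lemma ReC (r : R) : Re (r%:C) = r. Proof. by []. Qed.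
Lemma ImC (r : R) : Im (r%:C) = 0. Proof. by []. Qed.

Definition cab (a : R[i]) : R := Re `|a|.
Lemma cab_ge0 a : 0 <= cab a.
Proof. by rewrite /cab normc_def /= sqrtr_ge0. Qed.
Lemma normE (a : R[i]) : `|a| = (cab a)%:C.
Proof. by rewrite /cab normc_def. Qed.
Lemma cabJ a : cab a^* = cab a.
Proof. by rewrite /cab norm_conjC. Qed.
Lemma cabM a b : cab (a * b) = cab a * cab b.
Proof. by rewrite {1}/cab normrM !normE -rmorphM. Qed.


Lemma nmZ a x : nm (a *: x) = cab a * nm x.
Proof.
rewrite /hnorm ipZl ipZr mulrA -(normCK a) normE.
rewrite -rmorphXn /= ReM /= mul0r subr0 sqrtrM ?exprn_ge0 ?cab_ge0 //.
by rewrite sqrtr_sqr ger0_norm ?cab_ge0.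
Qed.


Lemma cabR (r : R) : cab r%:C = `|r|.
Proof. by rewrite /cab normc_def /= expr0n /= addr0 sqrtr_sqr. Qed.

Lemma re_sym x y : Re (ip x y) = Re (ip y x).
Proof. by rewrite ipC ReJ. Qed.

Lemma nm_sqrD x y : nm (x + y) ^+ 2 = nm x ^+ 2 + 2 * Re (ip x y) + nm y ^+ 2.
Proof.
rewrite !nm_sqr ipDl !ipDr !ReD [Re (ip y x)]re_sym; ring.
Qed.
Lemma nm_sqrB x y : nm (x - y) ^+ 2 = nm x ^+ 2 - 2 * Re (ip x y) + nm y ^+ 2.
Proof.
rewrite !nm_sqr ipBl !ipBr !ReB [Re (ip y x)]re_sym; ring.
Qed.

Lemma conjR (t : R) : (t%:C)^* = t%:C :> R[i].
Proof. transitivity (t +i* (- 0))%C; first by []. by rewrite oppr0. Qed.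

Lemma ReZr (t : R) x y : Re (ip x (t%:C *: y)) = t * Re (ip x y).
Proof. by rewrite ipZr ReM conjR /= mul0r subr0. Qed.
Lemma ReZl (t : R) x y : Re (ip (t%:C *: x) y) = t * Re (ip x y).
Proof. by rewrite ipZl ReM /= mul0r subr0. Qed.

Lemma sq_le (a b : R) : 0 <= b -> a ^+ 2 <= b ^+ 2 -> a <= b.
Proof. move=> hb h; nra. Qed.

Lemma CS x y : Re (ip x y) <= nm x * nm y.
Proof.
have [/nm_eq0 ->|ny] := eqVneq (nm y) 0; first by rewrite ip0r /= nm0 mulr0.
have ny0 : 0 < nm y by rewrite lt_neqAle eq_sym ny nm_ge0.
set r := Re (ip x y).
set t := r / nm y ^+ 2.
have := nm_ge0 (x - t%:C *: y); move=> _.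
have h := nm_sqrB x (t%:C *: y).
rewrite ReZr nmZ cabR exprMn real_normK ?num_real // in h.
have h0 : 0 <= nm (x - t%:C *: y) ^+ 2 by rewrite exprn_ge0 ?nm_ge0.
rewrite h in h0.
have e : t * nm y ^+ 2 = r by rewrite /t divfK // expf_neq0.
apply: sq_le; first by rewrite mulr_ge0 ?nm_ge0.
have : r ^+ 2 <= nm x ^+ 2 * nm y ^+ 2.
  have : 0 <= nm y ^+ 2 * (nm x ^+ 2 - 2 * (t * r) + t ^+ 2 * nm y ^+ 2).
    by rewrite mulr_ge0 // exprn_ge0 // ltW.
  have -> : nm y ^+ 2 * (nm x ^+ 2 - 2 * (t * r) + t ^+ 2 * nm y ^+ 2) =
     nm x ^+ 2 * nm y ^+ 2 - 2 * r * (t * nm y ^+ 2) + (t * nm y ^+ 2) ^+ 2 by ring.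
  rewrite e => h1; nra.
by rewrite exprMn => ?.
Qed.

Lemma CSabs x y : `|Re (ip x y)| <= nm x * nm y.
Proof.
rewrite ler_norml CS andbT.
have := CS (- x) y; rewrite ipNl ReN.
have -> : nm (- x) = nm x by rewrite -scaleN1r nmZ -(rmorphN1 (real_complex R)) cabR normrN1 mul1r.
by rewrite lerNl.
Qed.

Lemma nmN x : nm (- x) = nm x.
Proof. by rewrite -scaleN1r nmZ -(rmorphN1 (real_complex R)) cabR normrN1 mul1r. Qed.
Lemma nmB x y : nm (x - y) = nm (y - x).
Proof. by rewrite -nmN opprB. Qed.

Lemma nm_triangle x y : nm (x + y) <= nm x + nm y.
Proof.
apply: sq_le; first by rewrite addr_ge0 ?nm_ge0.
rewrite nm_sqrD; have := CS x y; move=> h; nra.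
Qed.

Lemma nm_tri3 x y z : nm (x - z) <= nm (x - y) + nm (y - z).
Proof. have -> : x - z = (x - y) + (y - z) by rewrite addrA subrK. exact: nm_triangle. Qed.

Lemma nm_small x : (forall e : R, 0 < e -> nm x <= e) -> x = 0.
Proof.
move=> h; apply: nm_eq0; apply/eqP; rewrite eq_le nm_ge0 andbT.
apply/ler_addgt0Pr => e e0; rewrite add0r; exact: h.
Qed.

Lemma ip_eq0_of x y : (forall z, ip z x = ip z y) -> x = y.
Proof. exact: ip_sym_ext. Qed.

Lemma complete (u : nat -> H) :
  (forall e : R, 0 < e -> exists N, forall m n, (N <= m)%N -> (N <= n)%N -> nm (u m - u n) < e) ->
  exists l : H, forall e : R, 0 < e -> exists N, forall n, (N <= n)%N -> nm (u n - l) < e.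
Proof. by case: hH => _ _ _ _ h; apply: h. Qed.

Lemma small_inv (d : R) : 0 < d -> exists N : nat, (N.+1%:R : R)^-1 < d.
Proof.
move=> d0; have hd : 0 <= d^-1 by rewrite invr_ge0 ltW.
have h := archi_boundP hd.
set n := Num.Def.archi_bound _ in h; exists n.
rewrite -(invrK d) ltf_pV2 ?posrE ?invr_gt0 //.
by apply: lt_le_trans h _; rewrite ler_nat.
Qed.

Lemma quad_zero (r M : R) : 0 <= M -> (forall t : R, 2 * t * r <= t ^+ 2 * M) -> r = 0.
Proof.
move=> M0 h; have := h (r / (M + 1)); set t := r / (M + 1) => ht.
have e : r = t * (M + 1) by rewrite /t divfK // gt_eqF // ltr_wpDl.
rewrite e in ht *.
have : t ^+ 2 * (M + 2) <= 0 by nra.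
move=> h2; have : t ^+ 2 <= 0 by nra.
move=> h3; have t0 : t = 0 by nra.
by rewrite t0 mul0r.
Qed.

Lemma Re_ii x m : Re (ip x ('i *: m)) = Im (ip x m).
Proof. rewrite ipZr ReM; case: (ip x m) => a b /=; rewrite !mul0r; ring. Qed.

Lemma parallelogram u v : nm (u + v) ^+ 2 + nm (u - v) ^+ 2 = 2 * nm u ^+ 2 + 2 * nm v ^+ 2.
Proof. rewrite nm_sqrD nm_sqrB; ring. Qed.

Lemma cab2 : cab (2 : R[i]) = 2.
Proof. by rewrite (_ : 2 = (2:R)%:C) ?cabR ?ger0_norm // rmorphMn /= rmorph1. Qed.

Section Proj.
Variable K : set H.
Hypotheses (K0 : K 0) (Klin : forall a x y, K x -> K y -> K (a *: x + y))
  (Kcl : forall x, hclosure ip K x -> K x).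

Lemma KD x y : K x -> K y -> K (x + y).
Proof. by move=> hx hy; rewrite -[x]scale1r; apply: Klin. Qed.
Lemma KZ a x : K x -> K (a *: x).
Proof. by move=> hx; rewrite -[_ *: _]addr0; apply: Klin. Qed.

Lemma proj_ex x : exists p, K p /\ forall m, K m -> ip (x - p) m = 0.
Proof.
pose S := [set r | exists2 m, K m & r = nm (x - m)].
have S0 : S (nm x) by exists 0 => //; rewrite subr0.
have Slb : lbound S 0 by move=> r [m _ ->]; apply: nm_ge0.
have hinf : has_inf S by split; [exists (nm x) | exists 0].
pose d := inf S.
have d_le m : K m -> d <= nm (x - m).
  by move=> hm; apply: (ge_inf (proj2 hinf)); exists m.
have d0 : 0 <= d by apply: lb_le_inf => //; exists (nm x).
have approx n : exists m, K m /\ nm (x - m) < d + (n.+1%:R)^-1.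
  have hn : 0 < (n.+1%:R : R)^-1 by rewrite invr_gt0 ltr0Sn.
  have [r [m hm ->] hr] := inf_adherent hn hinf.
  by exists m.
have [f hf] := choice approx.
have key n k : nm (f n - f k) ^+ 2 <=
   2 * (d + (n.+1%:R)^-1) ^+ 2 + 2 * (d + (k.+1%:R)^-1) ^+ 2 - 4 * d ^+ 2.
  have hp := parallelogram (x - f n) (x - f k).
  have e1 : x - f n - (x - f k) = f k - f n by rewrite opprB addrC -addrA addKr.
  set mid := (2^-1 : R[i]) *: (f n + f k).
  have e2 : x - f n + (x - f k) = 2 *: (x - mid).
    rewrite scalerBr /mid scalerA divff ?scale1r; last by rewrite pnatr_eq0.
    rewrite opprD !addrA; congr (_ - _); rewrite -addrA addrC -addrA.
    by rewrite scaler_nat mulr2n addrC.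
  rewrite e1 e2 nmZ cab2 (nmB (f k)) in hp.
  have hm : K mid by apply: KZ; apply: KD; case: (hf n); case: (hf k).
  have := d_le _ hm; move=> hdm.
  have hn := proj2 (hf n); have hk := proj2 (hf k).
  have i1 : 0 <= (n.+1%:R : R)^-1 by rewrite invr_ge0.
  have i2 : 0 <= (k.+1%:R : R)^-1 by rewrite invr_ge0.
  have n1 := nm_ge0 (x - f n); have n2 := nm_ge0 (x - f k).
  have n3 := nm_ge0 (x - mid).
  have s1 : nm (x - f n) ^+ 2 <= (d + (n.+1%:R)^-1) ^+ 2.
    by rewrite ler_pXn2r ?nnegrE ?addr_ge0 // ltW.
  have s2 : nm (x - f k) ^+ 2 <= (d + (k.+1%:R)^-1) ^+ 2.
    by rewrite ler_pXn2r ?nnegrE ?addr_ge0 // ltW.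
  have s3 : d ^+ 2 <= nm (x - mid) ^+ 2 by rewrite ler_pXn2r ?nnegrE.
  rewrite exprMn in hp.
  move: s1 s2 s3 hp; set a := (n.+1%:R^-1 : R); set b := (k.+1%:R^-1 : R); set N1 := nm (x - f n); set N2 := nm (x - f k); set N3 := nm (x - mid); set Q := nm (f n - f k); clearbody d; move=> s1 s2 s3 hp; lra.
have cauchy : forall e : R, 0 < e -> exists N, forall m n, (N <= m)%N -> (N <= n)%N ->
     nm (f m - f n) < e.
  move=> e e0.
  pose de := Num.min 1 (e ^+ 2 / (8 * d + 8)).
  have de0 : 0 < de by rewrite lt_min ltr01 divr_gt0 ?exprn_gt0 // ltr_wpDl // mulr_ge0.
  have [N hN] := small_inv _ de0.
  exists N => m n hm hn.
  have bnd j : (N <= j)%N -> (j.+1%:R : R)^-1 <= de.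
    move=> hj; apply: le_trans (ltW hN); rewrite lef_pV2 ?posrE ?ltr0Sn //.
    by rewrite ler_nat ltnS.
  have b1 := bnd _ hm; have b2 := bnd _ hn.
  have de1 : de <= 1 by rewrite ge_min lexx.
  have de2 : de * (8 * d + 8) <= e ^+ 2.
    rewrite -ler_pdivlMr ?ltr_wpDl ?mulr_ge0 //; by rewrite ge_min lexx orbT.
  have i1 : 0 <= (m.+1%:R : R)^-1 by rewrite invr_ge0.
  have i2 : 0 <= (n.+1%:R : R)^-1 by rewrite invr_ge0.
  have hk := key m n.
  have h2 : nm (f m - f n) ^+ 2 < e ^+ 2.
    apply: le_lt_trans hk _.
    have : 2 * (d + (m.+1%:R)^-1) ^+ 2 + 2 * (d + (n.+1%:R)^-1) ^+ 2 - 4 * d ^+ 2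
           <= de * (8 * d + 4).
      have da := ler_wpM2l d0 b1; have db := ler_wpM2l d0 b2.
      have a2 : (m.+1%:R : R)^-1 ^+ 2 <= de.
        move: ((m.+1%:R : R)^-1) b1 i1 => a ha1 ha2; nra.
      have b2' : (n.+1%:R : R)^-1 ^+ 2 <= de.
        move: ((n.+1%:R : R)^-1) b2 i2 => a ha1 ha2; nra.
      move: ((m.+1%:R : R)^-1) ((n.+1%:R : R)^-1) da db a2 b2' => a b *; lra.
    move=> h3; apply: le_lt_trans h3 _; lra.
  by rewrite -(@ltr_pXn2r _ 2) // nnegrE ?nm_ge0 // ltW.
have [p hp] := complete _ cauchy.
have Kp : K p.
  apply: Kcl => e e0; have [N hN] := hp e e0; exists (f N); first by case: (hf N).
  by rewrite nmB; apply: hN.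
have best m : K m -> nm (x - p) <= nm (x - m).
  move=> hm; apply: le_trans (d_le _ hm); apply/ler_addgt0Pr => e e0.
  have e2 : 0 < e / 2 by rewrite divr_gt0.
  have [N1 hN1] := hp _ e2; have [N2 hN2] := small_inv _ e2.
  pose n := maxn N1 N2.
  have h1 := hN1 n (leq_maxl _ _).
  have h2 : (n.+1%:R : R)^-1 <= (N2.+1%:R)^-1.
    by rewrite lef_pV2 ?posrE ?ltr0Sn // ler_nat ltnS leq_maxr.
  have h3 := proj2 (hf n).
  have := nm_tri3 x (f n) p; move=> h4.
  have -> : d + e = d + e / 2 + e / 2 by rewrite -addrA -splitr.
  apply: le_trans h4 _; apply: lerD; last exact: ltW.
  apply: ltW; apply: lt_le_trans h3 _; rewrite lerD2l; exact: (le_trans h2 (ltW hN2)).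
exists p; split => // m hm.
have hre w : K w -> Re (ip (x - p) w) = 0.
  move=> hw; apply: (@quad_zero _ (nm w ^+ 2)) => [|t]; first by rewrite exprn_ge0 ?nm_ge0.
  have := best (p + t%:C *: w) (KD _ _ Kp (KZ _ _ hw)).
  rewrite opprD addrA => hb.
  have hb2 : nm (x - p) ^+ 2 <= nm (x - p - t%:C *: w) ^+ 2.
    by rewrite ler_pXn2r ?nnegrE ?nm_ge0.
  rewrite (nm_sqrB (x - p)) ReZr nmZ cabR exprMn real_normK ?num_real // in hb2.
  nra.
have h1 := hre _ hm.
have h2 : Im (ip (x - p) m) = 0 by rewrite -Re_ii; apply: hre; apply: KZ.
by move: h1 h2; case: (ip (x - p) m) => a b /= -> ->.
Qed.

End Proj.

Section Lin.
Variable S : H -> H.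
Hypothesis hS : linear S.
Lemma linDZ a x y : S (a *: x + y) = a *: S x + S y.
Proof. exact: hS. Qed.
Lemma lin0 : S 0 = 0.
Proof.
have h := linDZ 1 0 0; rewrite scaler0 addr0 scale1r in h.
by have := congr1 (fun t => t - S 0) h; rewrite subrr addrK => <-.
Qed.
Lemma linD x y : S (x + y) = S x + S y.
Proof. by rewrite -{1}[x]scale1r linDZ scale1r. Qed.
Lemma linZ a x : S (a *: x) = a *: S x.
Proof. by rewrite -[a *: x]addr0 linDZ lin0 addr0. Qed.
Lemma linN x : S (- x) = - S x.
Proof. by rewrite -scaleN1r linZ scaleN1r. Qed.
Lemma linB x y : S (x - y) = S x - S y.
Proof. by rewrite linD linN. Qed.
End Lin.
Arguments linDZ {S}. Arguments lin0 {S}. Arguments linD {S}. Arguments linZ {S}. Arguments linN {S}. Arguments linB {S}.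

Lemma bnd_pos {S} : bounded_op ip S -> exists M, 0 <= M /\ forall x, nm (S x) <= M * nm x.
Proof.
case=> _ [M hM]; exists `|M|; split => // x; apply: le_trans (hM x) _.
by rewrite ler_wpM2r ?nm_ge0 ?ler_norm.
Qed.

Lemma abs_small {a C : R} : 0 <= C -> (forall e, 0 < e -> `|a| <= C * e) -> a = 0.
Proof.
move=> C0 h; apply/eqP; rewrite -normr_eq0 eq_le normr_ge0 andbT.
apply/ler_addgt0Pr => e e0; rewrite add0r.
have e1 : 0 < e / (C + 1) by rewrite divr_gt0 // ltr_wpDl.
apply: le_trans (h _ e1) _.
rewrite mulrA ler_pdivrMr ?ltr_wpDl //; nra.
Qed.

Lemma riesz_step {S} : bounded_op ip S -> forall y, exists w, forall x, ip (S x) y = ip x w.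
Proof.
move=> hS y; have lS := proj1 hS; have [M [M0 hM]] := bnd_pos hS.
pose K := [set x | ip (S x) y = 0].
have K0 : K 0 by rewrite /K /= (lin0 lS) ip0l.
have Klin a x z : K x -> K z -> K (a *: x + z).
  by rewrite /K /= => hx hz; rewrite (linDZ lS) ipDl ipZl hx hz mulr0 addr0.
have Kcl x : hclosure ip K x -> K x.
  move=> hx; rewrite /K /=.
  have key (e : R) : 0 < e -> exists2 u, ip (S x) y = ip (S u) y & nm u <= e.
    move=> e0; have [m hm hxm] := hx e e0; exists (x - m); last exact: ltW.
    by rewrite (linB lS) ipBl hm subr0.
  have hC : 0 <= M * nm y by rewrite mulr_ge0 ?nm_ge0.
  have bnd1 (e : R) : 0 < e -> `|Re (ip (S x) y)| <= (M * nm y) * e.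
    move=> e0; have [u -> hu] := key e e0.
    have hSu : nm (S u) <= M * e by apply: le_trans (hM u) _; rewrite ler_wpM2l.
    apply: le_trans (CSabs _ _) _; rewrite mulrAC ler_wpM2r ?nm_ge0 //.
  have bnd2 (e : R) : 0 < e -> `|Im (ip (S x) y)| <= (M * nm y) * e.
    move=> e0; have [u -> hu] := key e e0.
    have hSu : nm (S u) <= M * e by apply: le_trans (hM u) _; rewrite ler_wpM2l.
    rewrite -Re_ii; apply: le_trans (CSabs _ _) _.
    rewrite nmZ (_ : cab 'i = 1); last by rewrite /cab normc_def /= expr0n /= add0r expr1n sqrtr1.
    by rewrite mul1r mulrAC ler_wpM2r ?nm_ge0.
  have hre := abs_small hC bnd1.
  have him := abs_small hC bnd2.
  by move: hre him; case: (ip (S x) y) => a b /= -> ->.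
case: (pselect (forall x, K x)) => [hall|].
  by exists 0 => x; rewrite ip0r; apply: hall.
move=> /existsNP [x0 hx0].
have [p [Kp hp]] := @proj_ex K K0 Klin Kcl x0.
set u := x0 - p in hp.
have fu : ip (S u) y = ip (S x0) y by rewrite /u (linB lS) ipBl Kp subr0.
have fu0 : ip (S u) y != 0 by rewrite fu; apply/eqP.
have uu0 : ip u u != 0.
  apply/eqP => /ip_eq0 u0; move: fu0; by rewrite u0 (lin0 lS) ip0l eqxx.
exists ((ip (S u) y / ip u u)^* *: u) => x.
rewrite ipZr conjCK.
set fx := ip (S x) y; set f := ip (S u) y.
have Kv : K (fx *: u - f *: x).
  by rewrite /K /= (linB lS) !(linZ lS) ipBl !ipZl -/fx -/f mulrC subrr.
have h0 : ip (fx *: u - f *: x) u = 0 by rewrite ipC hp // rmorph0.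
rewrite ipBl !ipZl in h0.
apply: (mulIf uu0).
rewrite mulrAC divfK //; by apply/eqP; rewrite -subr_eq0 h0.
Qed.

Lemma adj_ex S : bounded_op ip S -> exists Sa, is_adjoint ip S Sa.
Proof.
move=> hS; have [Sa hSa] := choice (riesz_step hS).
have [M [M0 hM]] := bnd_pos hS.
exists Sa; split; last by move=> x y; apply: hSa.
split.
  move=> a y z; apply: ip_sym_ext => x.
  by rewrite ipDr ipZr -!hSa -ipZr -ipDr.
exists M => y.
have h1 : nm (Sa y) ^+ 2 <= M * nm (Sa y) * nm y.
  rewrite nm_sqr -hSa; apply: le_trans (CS _ _) _.
  by rewrite ler_wpM2r ?nm_ge0.
have hm : 0 <= M * nm y by rewrite mulr_ge0 ?nm_ge0.
rewrite mulrAC in h1; move: h1 hm (nm_ge0 (Sa y)).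
move: (M * nm y) (nm (Sa y)) => m s h1 hm hs; nra.
Qed.

Lemma bernoulli (h : R) n : 0 <= h -> 1 + n%:R * h <= (1 + h) ^+ n.
Proof.
move=> h0; elim: n => [|n IH]; first by rewrite mul0r addr0 expr0.
rewrite exprS -natr1.
have e1 : 0 <= 1 + h by rewrite addr_ge0.
have := ler_wpM2l e1 IH; move=> h1; apply: le_trans h1.
have : 0 <= n%:R * h * h by rewrite !mulr_ge0 ?ler0n.
move=> h2; nra.
Qed.

Lemma geom_small (q d : R) : 0 <= q -> q < 1 -> 0 < d -> exists N : nat, q ^+ N < d.
Proof.
move=> q0 q1 d0.
have [->|qn0] := eqVneq q 0; first by exists 1%N; rewrite expr1.
have qp : 0 < q by rewrite lt_neqAle eq_sym qn0 q0.
pose h := q^-1 - 1.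
have h0 : 0 < h by rewrite /h subr_gt0 invf_gt1.
have hd : 0 < h * d by rewrite mulr_gt0.
have [N hN] := small_inv _ hd.
exists N.+1.
have b := bernoulli h N.+1 (ltW h0).
have e : 1 + h = q^-1 by rewrite /h addrC subrK.
rewrite e exprVn in b.
have qN : 0 < q ^+ N.+1 by rewrite exprn_gt0.
have b2 : q ^+ N.+1 * (1 + N.+1%:R * h) <= 1.
  apply: le_trans (ler_wpM2l (ltW qN) b) _; by rewrite mulfV ?gt_eqF.
have Np : 0 < (N.+1%:R : R) by rewrite ltr0Sn.
have b3 : 1 < N.+1%:R * h * d.
  by rewrite -mulrA -ltr_pdivrMl // mulr1.
have Kp : 0 < N.+1%:R * h by rewrite mulr_gt0.
move: b2 b3 Kp qN.
move: (q ^+ N.+1) (N.+1%:R * h) => Q K *; nra.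
Qed.

Lemma fixpoint (F : H -> H) (q : R) : 0 <= q -> q < 1 ->
  (forall a b, nm (F a - F b) <= q * nm (a - b)) -> exists z, F z = z.
Proof.
move=> q0 q1 hF.
pose g k := iter k F 0.
pose C := nm (g 1%N - g 0%N).
have C0 : 0 <= C by apply: nm_ge0.
have step k : nm (g k.+1 - g k) <= q ^+ k * C.
  elim: k => [|k IH]; first by rewrite expr0 mul1r.
  apply: le_trans (hF _ _) _; rewrite exprS -mulrA ler_wpM2l //.
have est m j : (1 - q) * nm (g (m + j)%N - g m) <= C * (q ^+ m - q ^+ (m + j)).
  elim: j => [|j IH]; first by rewrite addn0 subrr nm0 mulr0 subrr mulr0.
  have t := nm_tri3 (g (m + j.+1)%N) (g (m + j)%N) (g m).
  have s := step (m + j)%N; rewrite -addnS in s.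
  rewrite addnS exprS.
  have q1' : 0 <= 1 - q by rewrite subr_ge0 ltW.
  have := ler_wpM2l q1' t; move=> t1.
  have qmj : 0 <= q ^+ (m + j) by rewrite exprn_ge0.
  move: t1 s IH; rewrite -addnS.
  move: (nm (g (m + j.+1)%N - g m)) (nm (g (m + j.+1)%N - g (m + j)%N)) (nm (g (m + j)%N - g m)).
  move=> A B D t1 s IH; nra.
have cauchy : forall e : R, 0 < e -> exists N, forall m n, (N <= m)%N -> (N <= n)%N ->
     nm (g m - g n) < e.
  move=> e e0.
  have de : 0 < e * (1 - q) / (C + 1) by rewrite !mulr_gt0 ?invr_gt0 ?subr_gt0 ?ltr_wpDl.
  have [N hN] := geom_small _ _ q0 q1 de.
  have key m j : (N <= m)%N -> nm (g (m + j)%N - g m) < e.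
    move=> hm.
    have h1 := est m j.
    have h2 : q ^+ m <= q ^+ N by apply: ler_wiXn2l => //; apply: ltW.
    have h3 : 0 <= q ^+ (m + j) by rewrite exprn_ge0.
    have h4 : (C + 1) * q ^+ N < e * (1 - q).
      by rewrite mulrC -ltr_pdivlMr ?ltr_wpDl.
    have q1' : 0 < 1 - q by rewrite subr_gt0.
    have hn := nm_ge0 (g (m + j)%N - g m).
    have hqN : 0 <= q ^+ N by rewrite exprn_ge0.
    move: h1 h2 h3 h4 hn hqN; move: (nm (g (m + j)%N - g m)) (q ^+ m) (q ^+ (m + j)) (q ^+ N).
    move=> A a b c *; nra.
  exists N => m n hm hn.
  case: (leqP m n) => hmn.
    by rewrite nmB -(subnKC hmn); apply: key.
  by rewrite -(subnKC (ltnW hmn)); apply: key.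
have [z hz] := complete _ cauchy.
exists z; apply/eqP; rewrite -subr_eq0; apply/eqP; apply: nm_small => e e0.
have e2 : 0 < e / 2 by rewrite divr_gt0.
have [N hN] := hz _ e2.
have h1 := hN N (leqnn N); have h2 := hN N.+1 (leqnSn N).
have t := nm_tri3 (F z) (g N.+1) z.
have hf : nm (F z - g N.+1) <= nm (g N - z).
  apply: le_trans (hF _ _) _; rewrite nmB -[X in _ <= X]mul1r ler_wpM2r ?nm_ge0 ?ltW //.
rewrite [e]splitr; apply: le_trans t _; apply: lerD; apply: ltW.
  exact: le_lt_trans hf h1.
exact: h2.
Qed.

Lemma ImD (a b : R[i]) : Im (a + b) = Im a + Im b.
Proof. by case: a; case: b. Qed.

Lemma pos_sa S : positive_op ip S -> forall x y, ip (S x) y = ip x (S y).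
Proof.
case=> [[lS _] hpos] x y.
have hIm u : Im (ip (S u) u) = 0.
  by have := hpos u; rewrite lecE => /andP[/eqP -> _].
have h1 := hIm (x + y).
rewrite (linD lS) ipDl !ipDr !ImD hIm [Im (ip (S y) y)]hIm in h1.
have h2 := hIm (x + 'i *: y).
rewrite (linD lS) (linZ lS) ipDl !ipDr ipZl !ipZr ipZl !ImD !ImM hIm in h2.
rewrite [Im (ip (S y) y)]hIm /= in h2.
rewrite [ip x (S y)]ipC.
have hy := hIm y.
move: h1 h2 hy; case: (ip (S x) y) => a1 a2; case: (ip (S y) x) => b1 b2 /=.
case: (ip (S y) y) => c1 c2 /= h1 h2 hy.
transitivity (b1 +i* (- b2))%C; last by [].
congr (_ +i* _)%C; lra.
Qed.

Section Closure.
Variable E : set H.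
Hypotheses (E0 : E 0) (Elin : forall a x y, E x -> E y -> E (a *: x + y)).

Lemma hcl_sub x : E x -> hclosure ip E x.
Proof. by move=> hx e e0; exists x => //; rewrite subrr nm0. Qed.

Lemma hcl0 : hclosure ip E 0.
Proof. exact: hcl_sub. Qed.

Lemma hcl_lin a x y : hclosure ip E x -> hclosure ip E y -> hclosure ip E (a *: x + y).
Proof.
move=> hx hy e e0.
have ca := cab_ge0 a.
have d0 : 0 < e / (cab a + 2) by rewrite divr_gt0 // ltr_wpDl.
have [u hu hxu] := hx _ d0; have [v hv hyv] := hy _ d0.
exists (a *: u + v); first exact: Elin.
have -> : a *: x + y - (a *: u + v) = a *: (x - u) + (y - v).
  by rewrite scalerBr opprD addrACA.
apply: le_lt_trans (nm_triangle _ _) _; rewrite nmZ.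
have : cab a * nm (x - u) <= cab a * (e / (cab a + 2)) by rewrite ler_wpM2l // ltW.
have e1 : e / (cab a + 2) * (cab a + 2) = e by rewrite divfK // gt_eqF // ltr_wpDl.
move: e1 hyv; move: (e / (cab a + 2)) => d e1 hyv h1; nra.
Qed.

Lemma hcl_cl x : hclosure ip (hclosure ip E) x -> hclosure ip E x.
Proof.
move=> hx e e0; have e2 : 0 < e / 2 by rewrite divr_gt0.
have [y hy hxy] := hx _ e2; have [u hu hyu] := hy _ e2.
exists u => //; apply: le_lt_trans (nm_tri3 x y u) _.
by rewrite [e]splitr ltrD.
Qed.
End Closure.

Lemma approx_bound (F : H -> H) v y (Kc : R) : hclosure ip (range F) v -> 0 <= Kc ->
  (forall w, Re (ip y (F w)) <= Kc * nm (F w)) -> Re (ip y v) <= Kc * nm v.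
Proof.
move=> hv K0 hF; apply/ler_addgt0Pr => e e0.
have ny := nm_ge0 y.
have d0 : 0 < e / (Kc + nm y + 1) by rewrite divr_gt0 // ltr_wpDl // addr_ge0.
have [u [w _ <-] hvw] := hv _ d0.
have e1 : ip y v = ip y (F w) + ip y (v - F w) by rewrite ipBr addrC subrK.
rewrite e1 ReD.
have h1 := hF w.
have h2 := CS y (v - F w).
have h3 : nm (F w) <= nm v + nm (v - F w).
  by rewrite nmB; have := nm_tri3 (F w) v 0; rewrite !subr0 addrC.
have e2 : e / (Kc + nm y + 1) * (Kc + nm y + 1) = e.
  by rewrite divfK // gt_eqF // ltr_wpDl // addr_ge0.
have n1 := nm_ge0 (v - F w).
have h4 : Kc * nm (F w) <= Kc * (nm v + nm (v - F w)) by rewrite ler_wpM2l.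
have h5 : nm y * nm (v - F w) <= nm y * (e / (Kc + nm y + 1)) by rewrite ler_wpM2l // ltW.
have h6 : Kc * nm (v - F w) <= Kc * (e / (Kc + nm y + 1)) by rewrite ler_wpM2l // ltW.
move: e2 h5 h6; move: (e / (Kc + nm y + 1)) => d e2 h5 h6; nra.
Qed.

Lemma cabV a : cab (a^-1) = (cab a)^-1.
Proof. by rewrite /cab normfV normE -fmorphV. Qed.

Section Main.
Variables (A A12 T Td : H -> H) (lam : R[i]).
Hypotheses (hA : positive_op ip A) (hAnz : exists x, A x <> 0)
  (hsq : is_sqrt_op ip A A12) (hT : in_BA12 ip A12 T) (hD : is_diamond ip A12 T Td)
  (hTn : (opnormA ip A T < (cabs lam)%:E)%E) (hTdn : (opnormA ip A Td < (cabs lam)%:E)%E).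

Lemma main_aux : in_rhoA ip A A12 Td lam.
Proof.
have lA := proj1 (proj1 hA).
have saA := pos_sa _ hA.
have [hA12p hA12A] := hsq.
have lA12 := proj1 (proj1 hA12p).
have saA12 := pos_sa _ hA12p.
have lT := proj1 (proj1 hT).
case: hD => [[lTd _] [[Ta [[[lTa _] adjT] hTaD]] hTdR]].
have anormE x : anorm ip A x = nm (A12 x).
  by rewrite /anorm /hnorm -hA12A saA12.
pose K := hclosure ip (range A).
have E0 : range A 0 by exists 0 => //; rewrite (lin0 lA).
have Elin a x y : range A x -> range A y -> range A (a *: x + y).
  by move=> [u _ <-] [v _ <-]; exists (a *: u + v) => //; rewrite (linDZ lA).
have K0 : K 0 by apply: hcl0.
have Klin a x y : K x -> K y -> K (a *: x + y) by apply: hcl_lin.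
have Kcl x : hclosure ip K x -> K x by apply: hcl_cl.
have KA x : K (A x) by apply: hcl_sub; exists x.
have [P hP] := choice (@proj_ex K K0 Klin Kcl).
have F1 x : A (x - P x) = 0.
  apply: ip_eq0; rewrite saA; apply: (proj2 (hP x)); exact: KA.
have F2 u : A u = 0 -> A12 u = 0.
  by move=> hu; apply: ip_eq0; rewrite saA12 hA12A hu ip0r.
have F3 u : A12 u = 0 -> A12 (T u) = 0.
  move=> hu; apply: ip_eq0; rewrite saA12 adjT hTaD -saA12 hu ip0l //.
have F4 u : A12 u = 0 -> A12 (Td u) = 0.
  by move=> hu; rewrite -hTaD hu (lin0 lTa).
have [c1 [hc1 c1l]] := getc _ _ _ hTn.
have [c2 [hc2 c2l]] := getc _ _ _ hTdn.
have bndT u : K u -> anorm ip A u = 1 -> anorm ip A (T u) <= c1.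
  move=> Ku hu; rewrite -lee_fin; apply: le_trans hc1; apply: ereal_sup_ubound.
  by exists u.
have bndTd u : K u -> anorm ip A u = 1 -> anorm ip A (Td u) <= c2.
  move=> Ku hu; rewrite -lee_fin; apply: le_trans hc2; apply: ereal_sup_ubound.
  by exists u.
have [u1 [Ku1 hu1]] : exists u, K u /\ anorm ip A u = 1.
  case: hAnz => x0 hx0.
  have hs : nm (A12 (A x0)) != 0.
    apply/eqP => /nm_eq0 h0; apply: hx0; apply: ip_eq0.
    by rewrite saA -hA12A h0 (lin0 lA12) ip0r.
  have hs0 : 0 < nm (A12 (A x0)) by rewrite lt_neqAle eq_sym hs nm_ge0.
  exists ((nm (A12 (A x0)))^-1%:C *: A x0); split.
    by rewrite -[_ *: _]addr0; apply: Klin.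
  by rewrite anormE (linZ lA12) nmZ cabR ger0_norm ?invr_ge0 ?ltW // mulVf.
have c10 : 0 <= c1 by apply: le_trans (bndT _ Ku1 hu1); rewrite anormE nm_ge0.
pose c := Num.max c1 c2.
have c0 : 0 <= c by rewrite le_max c10.
have cl : c < cab lam by rewrite gt_max c1l c2l.
have lamp : 0 < cab lam by apply: le_lt_trans cl.
have F5 (S : H -> H) (cS : R) : linear S -> cS <= c -> (forall u, A12 u = 0 -> A12 (S u) = 0) ->
    (forall u, K u -> anorm ip A u = 1 -> anorm ip A (S u) <= cS) ->
    forall w, nm (A12 (S w)) <= c * nm (A12 w).
  move=> lS cSc hker hb w.
  set p := P w.
  have hn : A12 (w - p) = 0 by apply: F2; apply: F1.
  have e1 : A12 w = A12 p.
    by apply/eqP; rewrite -subr_eq0 -(linB lA12) hn.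
  have e2 : A12 (S w) = A12 (S p).
    by apply/eqP; rewrite -subr_eq0 -(linB lA12) -(linB lS) hker.
  rewrite e1 e2.
  have [/nm_eq0 hp0|sn0] := eqVneq (nm (A12 p)) 0.
    by rewrite hker // nm0 hp0 nm0 mulr0.
  have s0 : 0 < nm (A12 p) by rewrite lt_neqAle eq_sym sn0 nm_ge0.
  set s := nm (A12 p) in s0 sn0 *.
  have Kp : K p by case: (hP w).
  have hu : anorm ip A (s^-1%:C *: p) = 1.
    by rewrite anormE (linZ lA12) nmZ cabR ger0_norm ?invr_ge0 ?ltW // mulVf.
  have Ku : K (s^-1%:C *: p) by rewrite -[_ *: _]addr0; apply: Klin.
  have hs1 : 0 <= s^-1 by rewrite invr_ge0 ltW.
  have := hb _ Ku hu; rewrite anormE (linZ lS) (linZ lA12) nmZ cabR (ger0_norm hs1).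
  rewrite mulrC ler_pdivrMr // => h.
  by apply: le_trans h _; apply: ler_wpM2r => //; apply: ltW.
have m1 : c1 <= c by rewrite le_max lexx.
have m2 : c2 <= c by rewrite le_max lexx orbT.
have hT5 := F5 T c1 lT m1 F3 bndT.
have hTd5 := F5 Td c2 lTd m2 F4 bndTd.
have sq_bound (v : H) (M : R) : 0 <= M -> Re (ip v v) <= M * nm v -> nm v <= M.
  move=> M0 h; rewrite -nm_sqr in h; have := nm_ge0 v.
  by move: (nm v) h => t h t0; nra.
have F6 x : nm (Td x) <= c * nm x.
  have Kc0 : 0 <= c * nm x by rewrite mulr_ge0 ?nm_ge0.
  apply: sq_bound => //; apply: (approx_bound _ _ _ _ (hTdR x) Kc0) => w.
  rewrite -saA12 -hTaD ipC -adjT ReJ re_sym saA12.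
  apply: le_trans (CS _ _) _.
  by rewrite [c * nm x]mulrC -mulrA; apply: ler_wpM2l; [exact: nm_ge0 | exact: hT5].
have F7 x : nm (P (T x)) <= c * nm x.
  have Kc0 : 0 <= c * nm x by rewrite mulr_ge0 ?nm_ge0.
  have Kv : K (P (T x)) by case: (hP (T x)).
  apply: sq_bound => //.
  have e : ip (P (T x)) (P (T x)) = ip (T x) (P (T x)).
    have := proj2 (hP (T x)) _ Kv; rewrite ipBl => /eqP; rewrite subr_eq0 => /eqP ->.
    by [].
  rewrite e; apply: (approx_bound _ _ _ _ Kv Kc0) => w.
  rewrite adjT -!hA12A hTaD.
  apply: le_trans (CS _ _) _.
  by rewrite [c * nm x]mulrC -mulrA; apply: ler_wpM2l; [exact: nm_ge0 | exact: hTd5].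
have Puniq p x : K p -> (forall m, K m -> ip (x - p) m = 0) -> p = P x.
  move=> Kp hp; apply/eqP; rewrite -subr_eq0; apply/eqP; apply: ip_eq0.
  have Kd : K (p - P x).
    rewrite addrC -scaleN1r; apply: Klin => //; by case: (hP x).
  have ed : (x - P x) - (x - p) = p - P x by rewrite opprB addrC -addrA addKr.
  rewrite -{1}ed ipBl.
  by rewrite (proj2 (hP x)) // hp // subrr.
have lP : linear P.
  move=> a x y; apply: esym; apply: Puniq.
    by apply: Klin; [case: (hP x) | case: (hP y)].
  move=> m Km.
  have -> : a *: x + y - (a *: P x + P y) = a *: (x - P x) + (y - P y).
    by rewrite scalerBr opprD addrACA.
  by rewrite ipDl ipZl !(proj2 (hP _)) // mulr0 addr0.
have lamn0 : lam != 0.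
  by apply/eqP => l0; move: lamp; rewrite l0 /cab normr0 /= ltxx.
pose L z := lam *: z - Td z.
have lL : linear L.
  move=> a u v; rewrite /L (linDZ lTd) scalerDr !scalerA scalerBr scalerA [lam * a]mulrC.
  by rewrite opprD addrACA.
have uniqL z : L z = 0 -> z = 0.
  move=> hz; apply: nm_eq0; apply/eqP; rewrite eq_le nm_ge0 andbT.
  have e : lam *: z = Td z by apply/eqP; rewrite -subr_eq0; apply/eqP; exact: hz.
  have := F6 z; rewrite -e nmZ => h.
  have := nm_ge0 z; move: h cl; move: (nm z) (cab lam) => t l h1 h2 h3; nra.
have q0 : 0 <= c / cab lam by rewrite divr_ge0 // ltW.
have q1 : c / cab lam < 1 by rewrite ltr_pdivrMr // mul1r.
have [Rr hRr] : {Rr : H -> H & forall x, L (Rr x) = x}.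
  apply: (@choice _ _ (fun x z => L z = x)) => x.
  have hF a b : nm ((lam^-1 *: x + lam^-1 *: Td a) - (lam^-1 *: x + lam^-1 *: Td b))
      <= c / cab lam * nm (a - b).
    rewrite opprD addrACA subrr add0r -scalerBr -(linB lTd) nmZ cabV.
    rewrite [c / _]mulrC -mulrA; apply: ler_wpM2l; [by rewrite invr_ge0 ltW | exact: F6].
  have [z hz] := fixpoint (fun z => lam^-1 *: x + lam^-1 *: Td z) _ q0 q1 hF.
  exists z; rewrite /L -{1}hz scalerDr !scalerA mulfV // !scale1r addrK //.
have RrL x : Rr (L x) = x.
  apply/eqP; rewrite -subr_eq0; apply/eqP; apply: uniqL; by rewrite (linB lL) hRr subrr.
have lRr : linear Rr.
  move=> a x y; rewrite -{1}(hRr x) -{1}(hRr y) -(linDZ lL) RrL //.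
have bRr x : nm (Rr x) <= (cab lam - c)^-1 * nm x.
  set z := Rr x.
  have e : lam *: z = x + Td z by rewrite -(hRr x) /L subrK.
  have h := nm_triangle x (Td z); rewrite -e nmZ in h.
  have h2 := F6 z.
  have cl' : 0 < cab lam - c by rewrite subr_gt0.
  rewrite mulrC ler_pdivlMr //.
  by move: h h2 cl'; move: (nm z) (nm x) (nm (Td z)) (cab lam) => t u v l *; nra.
have bndRr : bounded_op ip Rr by split => //; exists (cab lam - c)^-1.
have [Ra [bRa adjR]] := adj_ex _ bndRr.
have key u z : ip u (A12 (T z)) = ip (Td u) (A12 z).
  by rewrite -saA12 ipC adjT hTaD -ipC saA12.
have Ap x : A (P x) = A x.
  by apply/eqP; rewrite eq_sym -subr_eq0 -(linB lA) F1.
have rng y : exists z, Ra (A12 y) = A12 z.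
  have lstar : lam^* != 0 by rewrite conjC_eq0.
  have hF a b : nm (((lam^*)^-1 *: P y + (lam^*)^-1 *: P (T a)) -
                    ((lam^*)^-1 *: P y + (lam^*)^-1 *: P (T b))) <= c / cab lam * nm (a - b).
    rewrite opprD addrACA subrr add0r -scalerBr -(linB lP) -(linB lT) nmZ cabV cabJ.
    rewrite [c / _]mulrC -mulrA; apply: ler_wpM2l; [by rewrite invr_ge0 ltW | exact: F7].
  have [z hz] := fixpoint (fun z => (lam^*)^-1 *: P y + (lam^*)^-1 *: P (T z)) _ q0 q1 hF.
  have ez : lam^* *: z = P y + P (T z).
    by rewrite -{1}hz scalerDr !scalerA mulfV // !scale1r.
  have hd : A (lam^* *: z - T z - y) = 0.
    by rewrite ez !(linB lA) (linD lA) !Ap addrK subrr.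
  have h12 : lam^* *: A12 z - A12 (T z) = A12 y.
    by have := F2 _ hd; rewrite !(linB lA12) (linZ lA12) => /eqP; rewrite subr_eq0 => /eqP.
  exists z; apply: ip_sym_ext => x.
  rewrite -adjR -h12 ipBr ipZr conjCK key -ipZl -ipBl.
  by rewrite -/(L (Rr x)) hRr.
exists Rr; split; first by split => //; exists Ra; split.
split.
  case: hAnz => x0 hx0; exists x0 => h0; apply: hx0.
  by rewrite -(hRr x0) h0 (lin0 lL) (lin0 lA).
split.
  by move=> x; congr (A _); exact: hRr.
by move=> x; congr (A _); exact: RrL.
Qed.

End Main.

End Basic.

Theorem mainTheorem9 (R : realType) (H : lmodType R[i]) (ip : H -> H -> R[i])
  (A A12 T Td : H -> H) (lam : R[i]) :
  is_hilbert ip ->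
  positive_op ip A -> (exists x, A x <> 0) ->
  is_sqrt_op ip A A12 ->
  in_BA12 ip A12 T ->
  is_diamond ip A12 T Td ->
  (opnormA ip A T < (cabs lam)%:E)%E ->
  (opnormA ip A Td < (cabs lam)%:E)%E ->
  in_rhoA ip A A12 Td lam.
Proof.
move=> hH hA hAnz hsq hT hD hTn hTdn.
exact: (@main_aux R H ip hH A A12 T Td lam hA hAnz hsq hT hD hTn hTdn).
Qed.
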